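(* Let $(G_a,G_b)\sim ER(n;\mathbf p)$ be correlated graphs on vertex set $V$, let $h\le n-2$, and let $U=\{u_1,u_2\}\subseteq V$. Let $\mathbf w_a^U=f_h(G_a[V\setminus U])$, $\mathbf w_b^U=f_h(G_b[V\setminus U])$, $B_a^U=G_a[U,\mathbf w_a^U]$, $B_b^U=G_b[U,\mathbf w_b^U]$, and let $\mathcal E^H(U)$ be the event $\mathbf w_a^U=\mathbf w_b^U$. Then \[ B_a^U\sim ER(2,h,p_{1*}),\qquad B_b^U\sim ER(2,h,p_{*1}), \] and, conditionally on $\mathcal E^H(U)$, $(B_a^U,B_b^U)\sim ER(2,h,\mathbf p)$.
   Context: Correlated Erdős–Rényi model $ER(n;\mathbf{p})$: $G_a,G_b$ are random graphs on the same $n$-vertex set $V$; for each unordered pair $e$ of distinct vertices, independently, $(\mathbf 1[e\in E(G_a)],\mathbf 1[e\in E(G_b)])$ equals $(1,1),(1,0),(0,1),(0,0)$ with probabilities $p_{11},p_{10},p_{01},p_{00}$; $p_{1*}=p_{11}+p_{10}$, $p_{*1}=p_{11}+p_{01}$. $G[W]$ is the induced subgraph on $W$. $f_h(G)$ is the vector $(w_1,\dots,w_h)$ of $h$ distinct vertices of $G$ such that $\deg_G(w_i)$ equals the $i$-th largest degree of $G$ (ties broken by a fixed rule, so $f_h(G)$ is a function of $G$). For $U\subseteq V$ and a vector $\mathbf w=(w_1,\dots,w_h)$ of distinct vertices of $V\setminus U$, $G[U,\mathbf w]$ is the bipartite graph with left vertex set $U$, right vertex set $[h]$, and edge set $\{(u,j)\in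 U\times[h]:\{u,w_j\}\in E(G)\}$. $ER(2,h,q)$ denotes the random bipartite graph with left set $U$, right set $[h]$, each of the $2h$ possible edges present independently with probability $q$; $ER(2,h,\mathbf p)$ denotes the correlated pair of such bipartite graphs in which for each left–right pair independently the edge indicator pair takes values $(1,1),(1,0),(0,1),(0,0)$ with probabilities $p_{11},p_{10},p_{01},p_{00}$. *)

(* Defs.v *)
From HB Require Import structures.
From mathcomp Require Import all_boot all_order all_algebra.
Set Implicit Arguments. Unset Strict Implicit. Unset Printing Implicit Defensive.
Import Order.TTheory GRing.Theory Num.Theory.
Local Open Scope ring_scope.

(* Unordered pairs of distinct vertices of V = 'I_n, encoded as (i,j) with i<j. *)
Definition upair (n : nat) := {e : 'I_n * 'I_n | (e.1 < e.2)%N}.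

(* An outcome of the correlated pair (G_a,G_b): for each unordered pair the
   pair of edge indicators (1[e in G_a], 1[e in G_b]). *)
Definition outcome (n : nat) := {ffun upair n -> bool * bool}.

Section Prob.
Variable R : realFieldType.
Variables p11 p10 p01 p00 : R.

Definition pcell (x : bool * bool) : R :=
  match x with
  | (true, true) => p11 | (true, false) => p10
  | (false, true) => p01 | (false, false) => p00
  end.

Definition weight (n : nat) (om : outcome n) : R := \prod_(e : upair n) pcell (om e).

Definition Pr (n : nat) (E : pred (outcome n)) : R :=
  \sum_(om : outcome n | E om) weight om.

Definition ER2h_corr (h : nat) (b1 b2 : {ffun 'I_2 * 'I_h -> bool}) : R :=
  \prod_(x : 'I_2 * 'I_h) pcell (b1 x, b2 x).
End Prob.

Definition bern (R : realFieldType) (q : R) (b : bool) : R := if b then q else 1 - q.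
Definition ER2h (R : realFieldType) (h : nat) (q : R) (b : {ffun 'I_2 * 'I_h -> bool}) : R :=
  \prod_(x : 'I_2 * 'I_h) bern q (b x).

Definition adj_a (n : nat) (om : outcome n) (u v : 'I_n) : bool :=
  [exists e : upair n, ((val e == (u, v)) || (val e == (v, u))) && (om e).1].
Definition adj_b (n : nat) (om : outcome n) (u v : 'I_n) : bool :=
  [exists e : upair n, ((val e == (u, v)) || (val e == (v, u))) && (om e).2].

(* induced subgraph G[W], as an adjacency table on 'I_n with no edges outside W *)
Definition induced (n : nat) (A : 'I_n -> 'I_n -> bool) (W : {set 'I_n})
  : {ffun 'I_n * 'I_n -> bool} :=
  [ffun x => [&& x.1 \in W, x.2 \in W & A x.1 x.2]].

Definition deg (n : nat) (W : {set 'I_n}) (A : {ffun 'I_n * 'I_n -> bool}) (v : 'I_n) : nat :=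
  #|[set w in W | A (v, w)]|.

(* i-th largest degree (0-indexed) among the vertices of W *)
Definition kth_deg (n : nat) (W : {set 'I_n}) (A : {ffun 'I_n * 'I_n -> bool}) (i : nat) : nat :=
  nth 0%N (sort geq [seq deg W A v | v <- enum W]) i.

(* Being a
   function of (W, A), ties are broken by a fixed rule. *)
Definition top_rule (n h : nat)
  (f : {set 'I_n} -> {ffun 'I_n * 'I_n -> bool} -> h.-tuple 'I_n) : Prop :=
  forall (W : {set 'I_n}) (A : {ffun 'I_n * 'I_n -> bool}), (h <= #|W|)%N ->
    uniq (f W A) /\
    forall i : 'I_h, tnth (f W A) i \in W /\ deg W A (tnth (f W A) i) = kth_deg W A i.

Definition lab (n : nat) (u1 u2 : 'I_n) (k : 'I_2) : 'I_n := if k == ord0 then u1 else u2.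

Definition bip (n h : nat) (A : 'I_n -> 'I_n -> bool) (u1 u2 : 'I_n) (w : h.-tuple 'I_n)
  : {ffun 'I_2 * 'I_h -> bool} :=
  [ffun x => A (lab u1 u2 x.1) (tnth w x.2)].

(* Main.v *)
Require Import Defs.
From HB Require Import structures.
From mathcomp Require Import all_boot all_order all_algebra.
From mathcomp Require Import ring lra.
Set Implicit Arguments. Unset Strict Implicit. Unset Printing Implicit Defensive.
Import Order.TTheory GRing.Theory Num.Theory.
Local Open Scope ring_scope.
Section Gen.
Variables (R : realFieldType) (p11 p10 p01 p00 : R) (n : nat).
Hypothesis psum : p11 + p10 + p01 + p00 = 1.
Local Notation pc := (pcell p11 p10 p01 p00).
Local Notation PR := (@Pr R p11 p10 p01 p00 n).

Definition upd (om : outcome n) e0 v : outcome n :=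
  [ffun e => if e == e0 then v else om e].

Lemma sum_pcell_cond (C : pred (bool * bool)) :
  \sum_(v | C v) pc v = (if C (true,true) then p11 else 0) + (if C (true,false) then p10 else 0)
     + (if C (false,true) then p01 else 0) + (if C (false,false) then p00 else 0).
Proof.
rewrite big_mkcond /=.
transitivity (\sum_(p : bool * bool | xpredT p.1 && xpredT p.2)
   (fun a b => if C (a, b) then pc (a, b) else 0) p.1 p.2).
  by apply: eq_big => // -[].
rewrite -(pair_big xpredT xpredT (fun a b => if C (a, b) then pc (a, b) else 0)) /=.
rewrite !big_bool /=; rewrite !addrA; done.
Qed.

Lemma sum_pcell : \sum_v pc v = 1.
Proof.
by rewrite (sum_pcell_cond xpredT) /= -psum.
Qed.

Lemma Pr_total : PR xpredT = 1.
Proof.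
rewrite /Pr /weight.
have := bigA_distr_bigA (fun (_ : upair n) (v : bool * bool) => pc v).
rewrite /= => <-.
by apply: big1 => e _; rewrite sum_pcell.
Qed.

Lemma Pr0 (E : pred (outcome n)) : (forall om, ~~ E om) -> PR E = 0.
Proof. move=> h; rewrite /Pr big_pred0 // => om; exact: negbTE. Qed.

Lemma Pr_part (T : finType) (k : outcome n -> T) (Q : pred (outcome n)) :
  PR Q = \sum_(t : T) PR (fun om => (k om == t) && Q om).
Proof.
rewrite /Pr (partition_big k xpredT) //.
by apply: eq_bigr => t _; apply: eq_bigl => om; rewrite andbC.
Qed.

Lemma one_edge (E : pred (outcome n)) (e0 : upair n) (C : pred (bool * bool)) :
  (forall om v, E (upd om e0 v) = E om) ->
  PR (fun om => E om && C (om e0)) = PR E * \sum_(v | C v) pc v.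
Proof.
move=> hE.
pose G (om : outcome n) := \prod_(e | e != e0) pc (om e).
pose S v := \sum_(om | E om && (om e0 == v)) G om.
have wE om : weight p11 p10 p01 p00 om = pc (om e0) * G om.
  by rewrite /weight (bigD1 e0).
have Sv v : S v = S (true, true).
  pose c0 := (true, true).
  pose sw x := if x == v then c0 else if x == c0 then v else x.
  have swK : involutive sw.
    move=> x; rewrite /sw.
    case: (eqVneq x v) => [->|xv].
      by case: (eqVneq c0 v) => [->|cv]; rewrite ?eqxx.
    case: (eqVneq x c0) => [->|xc]; first by rewrite eqxx.
    by rewrite (negbTE xv) (negbTE xc).
  have swE x : (sw x == v) = (x == c0).
    have swv : sw v = c0 by rewrite /sw eqxx.
    by rewrite -swv -(inj_eq (inv_inj swK) x (sw v)) swK.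
  pose phi om := upd om e0 (sw (om e0)).
  have phiK : involutive phi.
    move=> om; apply/ffunP => e; rewrite /phi /upd !ffunE.
    by case: eqVneq => [->|//]; rewrite eqxx swK.
  rewrite /S (reindex_inj (inv_inj phiK)).
  apply: eq_big => om.
    by rewrite /phi hE ffunE eqxx swE.
  move=> _; apply: eq_bigr => e ne; by rewrite /phi ffunE (negbTE ne).
have L (D : pred (bool * bool)) :
    PR (fun om => E om && D (om e0)) = (\sum_(v | D v) pc v) * S (true, true).
  rewrite /Pr (partition_big (fun om : outcome n => om e0) D); last by move=> om /andP[].
  rewrite mulr_suml; apply: eq_bigr => v Dv.
  rewrite -(Sv v) /S mulr_sumr; apply: eq_big => om.
    by case: (E om); case: (eqVneq (om e0) v) => [->|]; rewrite ?Dv ?andbF.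
  by move=> /andP[_ /eqP <-]; rewrite wE.
rewrite L.
have -> : PR E = PR (fun om => E om && xpredT (om e0)).
  by apply: eq_bigl => om; rewrite andbT.
by rewrite (L xpredT) sum_pcell mul1r mulrC.
Qed.

Lemma multi (X : finType) (g : X -> upair n) (E : pred (outcome n))
  (C : X -> pred (bool * bool)) :
  injective g ->
  (forall om om' : outcome n, (forall e, e \notin codom g -> om e = om' e) -> E om = E om') ->
  PR (fun om => E om && [forall x, C x (om (g x))]) =
  PR E * \prod_x \sum_(v | C x v) pc v.
Proof.
move=> ginj hE.
have H (s : seq X) : uniq s ->
   PR (fun om => E om && all (fun x => C x (om (g x))) s) =
   PR E * \prod_(x <- s) \sum_(v | C x v) pc v.
  elim: s => [|x s IH] /=.
    by move=> _; rewrite big_nil mulr1; apply: eq_bigl => om; rewrite andbT.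
  move=> /andP[xs us]; rewrite big_cons.
  have -> : PR (fun om => E om && (C x (om (g x)) && all (fun x => C x (om (g x))) s)) =
            PR (fun om => (E om && all (fun x => C x (om (g x))) s) && C x (om (g x))).
    by apply: eq_bigl => om; case: (E om); case: (C x _); case: (all _ _).
  rewrite one_edge; first by rewrite IH // -mulrA [X in _ * X]mulrC.
  move=> om v; congr andb.
    apply: hE => e ne; rewrite ffunE; case: eqVneq => // ex.
    by move: ne; rewrite ex codom_f.
  apply: eq_in_all => y ys /=; rewrite ffunE.
  case: eqVneq => // /ginj yx; by move: xs; rewrite -yx ys.
have := H (index_enum X) (index_enum_uniq X).
move=> <-; apply: eq_bigl => om; congr andb.
apply/forallP/allP => [h x _ | h x]; [exact: h | exact: h x (mem_index_enum x)].
Qed.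

End Gen.
Section Graph.
Variable n : nat.

Definition pr_of (a b : 'I_n) : 'I_n * 'I_n := if (a < b)%N then (a, b) else (b, a).

Lemma pr_of_lt a b : a != b -> ((pr_of a b).1 < (pr_of a b).2)%N.
Proof.
rewrite /pr_of; case: (ltnP a b) => //= h ne.
by rewrite ltn_neqAle h andbT eq_sym.
Qed.

Definition up (d : upair n) (a b : 'I_n) : upair n := insubd d (pr_of a b).

Lemma val_up d a b : a != b -> val (up d a b) = pr_of a b.
Proof. by move=> ne; rewrite /up val_insubd /= pr_of_lt. Qed.

Lemma pr_of_eq a b a' b' : pr_of a b = pr_of a' b' ->
  ((a == a') && (b == b')) || ((a == b') && (b == a')).
Proof.
by rewrite /pr_of; case: ifP; case: ifP => _ _ [-> ->]; rewrite !eqxx ?orbT.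
Qed.

Lemma mem_pr_of l t a b : pr_of l t = (a, b) -> (l == a) || (l == b).
Proof. by rewrite /pr_of; case: ifP => _ [e1 e2]; rewrite ?e1 ?e2 !eqxx ?orbT. Qed.

Lemma adj_a_up d (om : outcome n) a b : a != b -> adj_a om a b = (om (up d a b)).1.
Proof.
move=> ne; apply/existsP/idP => [[e /andP[ce oe]] | h].
  suff ee : e = up d a b by rewrite -ee.
  apply: val_inj; rewrite val_up //.
  have lt := valP e.
  case/orP: ce => /eqP ev; rewrite /pr_of ev in lt *.
    by rewrite lt.
  by rewrite ltnNge (ltnW lt).
exists (up d a b); rewrite h andbT val_up //.
by rewrite /pr_of; case: ifP => _; rewrite eqxx ?orbT.
Qed.

Lemma adj_b_up d (om : outcome n) a b : a != b -> adj_b om a b = (om (up d a b)).2.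
Proof.
move=> ne; apply/existsP/idP => [[e /andP[ce oe]] | h].
  suff ee : e = up d a b by rewrite -ee.
  apply: val_inj; rewrite val_up //.
  have lt := valP e.
  case/orP: ce => /eqP ev; rewrite /pr_of ev in lt *.
    by rewrite lt.
  by rewrite ltnNge (ltnW lt).
exists (up d a b); rewrite h andbT val_up //.
by rewrite /pr_of; case: ifP => _; rewrite eqxx ?orbT.
Qed.

End Graph.

Section Main.
Variables (n h : nat) (u1 u2 : 'I_n) (d : upair n).
Hypothesis ne12 : u1 != u2.
Local Notation W := (~: [set u1; u2]).
Variable w : h.-tuple 'I_n.
Hypothesis wW : forall j, tnth w j \in W.
Hypothesis wu : uniq w.
Definition gw (x : 'I_2 * 'I_h) : upair n := up d (lab u1 u2 x.1) (tnth w x.2).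

Lemma lab_notW k : lab u1 u2 k \notin W.
Proof. by rewrite inE /lab negbK; case: ifP => _; rewrite !inE eqxx ?orbT. Qed.

Lemma nex (x : 'I_2 * 'I_h) : lab u1 u2 x.1 != tnth w x.2.
Proof. by apply/eqP => e; move: (wW x.2); rewrite -e (negbTE (lab_notW _)). Qed.

Lemma lab_inj : injective (lab u1 u2).
Proof.
move=> [[|[|k]] hk] [[|[|k']] hk'] //=; rewrite /lab /=;
 try (by move=> _; apply: val_inj);
 try (by move=> e; move: ne12; rewrite e eqxx);
 try (by move=> e; move: ne12; rewrite -e eqxx).
Qed.

Lemma gw_inj : injective gw.
Proof.
move=> [k j] [k' j'] /(congr1 val); rewrite /gw !val_up ?nex //= => /pr_of_eq.
case/orP => /andP[/eqP e1 /eqP e2].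
  by rewrite (lab_inj e1) ((tuple_uniqP _ wu) _ _ e2).
by move: (lab_notW k); rewrite e1 wW.
Qed.

Lemma notin_codom (e : upair n) a b : a \in W -> b \in W ->
  (val e == (a, b)) || (val e == (b, a)) -> e \notin codom gw.
Proof.
move=> aW bW ce; apply/codomP => [[x ex]].
rewrite ex /gw val_up ?nex // in ce.
have : (lab u1 u2 x.1 == a) || (lab u1 u2 x.1 == b).
  case/orP: ce => /eqP /mem_pr_of //; by rewrite orbC.
by case/orP => /eqP e'; move: (lab_notW x.1); rewrite e' ?aW ?bW.
Qed.

Lemma ind_a (om om' : outcome n) :
  (forall e, e \notin codom gw -> om e = om' e) ->
  induced (adj_a om) W = induced (adj_a om') W.
Proof.
move=> H; apply/ffunP => -[a b]; rewrite !ffunE /=.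
case aW: (a \in W); case bW: (b \in W) => //=.
apply/existsP/existsP => -[e /andP[ce oe]]; exists e; rewrite ce /=.
  by rewrite -H // (notin_codom aW bW ce).
by rewrite H // (notin_codom aW bW ce).
Qed.

Lemma ind_b (om om' : outcome n) :
  (forall e, e \notin codom gw -> om e = om' e) ->
  induced (adj_b om) W = induced (adj_b om') W.
Proof.
move=> H; apply/ffunP => -[a b]; rewrite !ffunE /=.
case aW: (a \in W); case bW: (b \in W) => //=.
apply/existsP/existsP => -[e /andP[ce oe]]; exists e; rewrite ce /=.
  by rewrite -H // (notin_codom aW bW ce).
by rewrite H // (notin_codom aW bW ce).
Qed.

Lemma bip_eq_a (om : outcome n) b :
  (bip (adj_a om) u1 u2 w == b) = [forall x, (om (gw x)).1 == b x].
Proof.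
apply/eqP/forallP => [<- x | H]; first by rewrite ffunE (adj_a_up d) ?nex // /gw.
by apply/ffunP => x; rewrite ffunE (adj_a_up d) ?nex //; apply/eqP; exact: H.
Qed.

Lemma bip_eq_b (om : outcome n) b :
  (bip (adj_b om) u1 u2 w == b) = [forall x, (om (gw x)).2 == b x].
Proof.
apply/eqP/forallP => [<- x | H]; first by rewrite ffunE (adj_b_up d) ?nex // /gw.
by apply/ffunP => x; rewrite ffunE (adj_b_up d) ?nex //; apply/eqP; exact: H.
Qed.

End Main.
Theorem lemma4p12 (R : realFieldType) (n h : nat) (p11 p10 p01 p00 : R)
  (f : {set 'I_n} -> {ffun 'I_n * 'I_n -> bool} -> h.-tuple 'I_n)
  (u1 u2 : 'I_n) :
  0 <= p11 -> 0 <= p10 -> 0 <= p01 -> 0 <= p00 ->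
  p11 + p10 + p01 + p00 = 1 ->
  (h <= n - 2)%N ->
  u1 != u2 ->
  top_rule f ->
  let W := ~: [set u1; u2] in
  let wa := fun om : outcome n => f W (induced (adj_a om) W) in
  let wb := fun om : outcome n => f W (induced (adj_b om) W) in
  let Ba := fun om : outcome n => bip (adj_a om) u1 u2 (wa om) in
  let Bb := fun om : outcome n => bip (adj_b om) u1 u2 (wb om) in
  let P := Pr p11 p10 p01 p00 (n := n) in
  (forall b : {ffun 'I_2 * 'I_h -> bool},
      P (fun om => Ba om == b) = ER2h (p11 + p10) b) /\
  (forall b : {ffun 'I_2 * 'I_h -> bool},
      P (fun om => Bb om == b) = ER2h (p11 + p01) b) /\
  (forall b1 b2 : {ffun 'I_2 * 'I_h -> bool},
      P (fun om => [&& Ba om == b1, Bb om == b2 & wa om == wb om])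
      = P (fun om => wa om == wb om) * ER2h_corr p11 p10 p01 p00 b1 b2).
Proof.
move=> _ _ _ _ psum hn ne ftop W wa wb Ba Bb P.
pose d : upair n := exist _ (pr_of u1 u2) (pr_of_lt ne).
pose valid (w : h.-tuple 'I_n) := uniq w && [forall j, tnth w j \in W].
have hW : (h <= #|W|)%N.
  have := cardsC [set u1; u2]; rewrite cards2 ne card_ord => e.
  by rewrite -e addKn in hn.
have vf A : valid (f W A).
  have [u ht] := ftop W A hW; rewrite /valid u /=.
  by apply/forallP => j; exact: (ht j).1.
have nva w om : ~~ valid w -> wa om != w.
  by move=> vw; apply/eqP => e; move: (vf (induced (adj_a om) W)); rewrite -/(wa om) e (negbTE vw).
have nvb w om : ~~ valid w -> wb om != w.
  by move=> vw; apply/eqP => e; move: (vf (induced (adj_b om) W)); rewrite -/(wb om) e (negbTE vw).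
have totA : \sum_w P (fun om => wa om == w) = 1.
  rewrite -(Pr_total n psum) /P (Pr_part _ _ _ _ wa); apply: eq_bigr => w _.
  by apply: eq_bigl => om; rewrite andbT.
have totB : \sum_w P (fun om => wb om == w) = 1.
  rewrite -(Pr_total n psum) /P (Pr_part _ _ _ _ wb); apply: eq_bigr => w _.
  by apply: eq_bigl => om; rewrite andbT.
split; [|split].
- move=> b; rewrite /P (Pr_part _ _ _ _ wa).
  transitivity (\sum_w P (fun om => wa om == w) * ER2h (p11 + p10) b); last first.
    by rewrite -mulr_suml totA mul1r.
  apply: eq_bigr => w _.
  case vw: (valid w); last first.
    rewrite /P !Pr0 ?mul0r // => om; rewrite (negbTE (nva w om _)) ?vw //.
  case/andP: vw => wu /forallP wW.
  transitivity (P (fun om => (wa om == w) &&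
      [forall x, (fun x (v : bool * bool) => v.1 == b x) x (om (gw u1 u2 d w x))])).
    apply: eq_bigl => om; case: eqVneq => //= ea.
    by rewrite /Ba ea (bip_eq_a d wW).
  rewrite /P (multi psum (g:=gw u1 u2 d w) (E:= fun om => wa om == w) (fun x (v:bool*bool) => v.1 == b x)); first congr (_ * _).
  + apply: eq_bigr => x _; rewrite sum_pcell_cond /bern /=.
    case: (b x) => /=; lra.
  + exact: (gw_inj ne wW wu).
  + by move=> om om' H; rewrite /wa (ind_a wW H).
- move=> b; rewrite /P (Pr_part _ _ _ _ wb).
  transitivity (\sum_w P (fun om => wb om == w) * ER2h (p11 + p01) b); last first.
    by rewrite -mulr_suml totB mul1r.
  apply: eq_bigr => w _.
  case vw: (valid w); last first.
    rewrite /P !Pr0 ?mul0r // => om; rewrite (negbTE (nvb w om _)) ?vw //.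
  case/andP: vw => wu /forallP wW.
  transitivity (P (fun om => (wb om == w) &&
      [forall x, (fun x (v : bool * bool) => v.2 == b x) x (om (gw u1 u2 d w x))])).
    apply: eq_bigl => om; case: eqVneq => //= ea.
    by rewrite /Bb ea (bip_eq_b d wW).
  rewrite /P (multi psum (g:=gw u1 u2 d w) (E:= fun om => wb om == w) (fun x (v:bool*bool) => v.2 == b x)); first congr (_ * _).
  + apply: eq_bigr => x _; rewrite sum_pcell_cond /bern /=.
    case: (b x) => /=; lra.
  + exact: (gw_inj ne wW wu).
  + by move=> om om' H; rewrite /wb (ind_b wW H).
- move=> b1 b2; rewrite /P (Pr_part _ _ _ _ wa) (Pr_part _ _ _ _ wa (fun om => wa om == wb om)) mulr_suml.
  apply: eq_bigr => w _.
  case vw: (valid w); last first.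
    rewrite !Pr0 ?mul0r // => om; rewrite (negbTE (nva w om _)) ?vw //.
  case/andP: vw => wu /forallP wW.
  transitivity (P (fun om => ((wa om == w) && (wb om == w)) &&
      [forall x, (fun x (v : bool * bool) => v == (b1 x, b2 x)) x (om (gw u1 u2 d w x))])).
    apply: eq_bigl => om; case: eqVneq => //= ea.
    case: (eqVneq (wb om) w) => eb /=; last by rewrite ea (eq_sym w) (negbTE eb) !andbF.
    rewrite /Ba /Bb ea eb eqxx andbT (bip_eq_a d wW) (bip_eq_b d wW).
    apply/andP/forallP => [[/forallP h1 /forallP h2] x | H].
      by case: (om _) (h1 x) (h2 x) => a c /= /eqP -> /eqP ->.
    by split; apply/forallP => x; have /eqP -> := H x.
  rewrite /P (multi psum (g:=gw u1 u2 d w) (E:= fun om => (wa om == w) && (wb om == w)) (fun x (v:bool*bool) => v == (b1 x, b2 x))).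
  + congr (_ * _).
      by apply: eq_bigl => om; case: eqVneq => //= ->.
    by rewrite /ER2h_corr; apply: eq_bigr => x _; rewrite big_pred1_eq.
  + exact: (gw_inj ne wW wu).
  + by move=> om om' H; rewrite /wa /wb (ind_a wW H) (ind_b wW H).
Qed.
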